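(* Let $n\ge 1$ be an integer, $a>0$, and let $a_0,\dots,a_{n-1}:((-a,a)\setminus\{0\})\times\mathbb{K}\to\mathbb{K}$ be arbitrary functions, where $\mathbb{K}=\mathbb{R}$ or $\mathbb{C}$. Let $f\in C^\infty(-a,a)$ be a solution of $$f^{(n)}(x)+a_{n-1}(x,f(x))f^{(n-1)}(x)+\cdots+a_0(x,f(x))f(x)=0,\qquad x\in(-a,a)\setminus\{0\},$$ satisfying $f(0)=f'(0)=\cdots=f^{(n-1)}(0)=0$. Let $B_n=\sum_{k=0}^{n-1}\frac{1}{k!}$ and suppose $$\limsup_{x\to 0}|x|^{n-k}\,|a_k(x,f(x))|< \frac{1}{B_n},\qquad k=0,1,\dots,n-1.$$ Then there exists $\delta>0$ such that $f\equiv 0$ on $[-\delta,\delta]$.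
   Context: The coefficients may be singular at $x=0$; the equation is only required to hold for $x\neq 0$. *)

(* Defs.v *)
From Stdlib Require Import Reals Lra Arith Factorial.
Open Scope R_scope.

Definition B (n : nat) : R := sum_f_R0 (fun k => / INR (fact k)) (n - 1).

(* limsup_{x -> 0} g x < c  (g considered on the punctured neighbourhood of 0):
   inf_{d>0} sup_{0<|x|<d} g x < c, written out. *)
Definition limsup_at0_lt (g : R -> R) (c : R) : Prop :=
  exists c', c' < c /\ exists d, 0 < d /\
    forall x, 0 < Rabs x < d -> g x <= c'.

(* D is the sequence of derivatives of f on (-a,a): D 0 = f and
   D (k+1) is the derivative of D k at every point of (-a,a).
   Existence of such D is exactly f in C^infinity(-a,a). *)
Definition derivs_on (a : R) (f : R -> R) (D : nat -> R -> R) : Prop :=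
  (forall x, -a < x < a -> D 0%nat x = f x) /\
  (forall k x, -a < x < a -> derivable_pt_lim (D k) x (D (S k) x)).

Definition smooth_on (a : R) (f : R -> R) : Prop := exists D, derivs_on a f D.

Definition Cx : Type := (R * R)%type.
Definition C0 : Cx := (0, 0).
Definition Cadd (z w : Cx) : Cx := (fst z + fst w, snd z + snd w).
Definition Cmul (z w : Cx) : Cx :=
  (fst z * fst w - snd z * snd w, fst z * snd w + snd z * fst w).
Definition Cnorm (z : Cx) : R := sqrt (fst z ^ 2 + snd z ^ 2).
Fixpoint Csum (F : nat -> Cx) (m : nat) : Cx :=
  match m with
  | O => F O
  | S m' => Cadd (Csum F m') (F (S m'))
  end.

Definition Cderivs_on (a : R) (f : R -> Cx) (D : nat -> R -> Cx) : Prop :=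
  (forall x, -a < x < a -> D 0%nat x = f x) /\
  (forall k x, -a < x < a ->
     derivable_pt_lim (fun t => fst (D k t)) x (fst (D (S k) x)) /\
     derivable_pt_lim (fun t => snd (D k t)) x (snd (D (S k) x))).

Definition Csmooth_on (a : R) (f : R -> Cx) : Prop := exists D, Cderivs_on a f D.

(* Main.v *)
Require Import Defs.
From Stdlib Require Import Reals Lra Lia Factorial.
Open Scope R_scope.
Open Scope R_scope.

Lemma dlim_ext f x l l' : derivable_pt_lim f x l -> l = l' -> derivable_pt_lim f x l'.
Proof. intros H ->; exact H. Qed.

Lemma dp K m t : derivable_pt_lim (fun t => K * t ^ S m) t (K * (INR (S m) * t ^ m)).
Proof.
  pose proof (derivable_pt_lim_scal (fun y => y ^ S m) K t _ (derivable_pt_lim_pow t (S m))) as H.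
  exact H.
Qed.

Lemma dq K m t : derivable_pt_lim (fun t => K * (- t) ^ S m) t (- (K * (INR (S m) * (-t) ^ m))).
Proof.
  assert (H1 : derivable_pt_lim (fun t => - t) t (-1)).
  { pose proof (derivable_pt_lim_opp id t 1 (derivable_pt_lim_id t)) as H. exact H. }
  pose proof (derivable_pt_lim_comp (fun t => -t) (fun y => y ^ S m) t _ _ H1 (derivable_pt_lim_pow (-t) (S m))) as H2.
  pose proof (derivable_pt_lim_scal _ K t _ H2) as H3.
  eapply dlim_ext. exact H3. simpl. ring.
Qed.

Lemma dminus f g x l1 l2 : derivable_pt_lim f x l1 -> derivable_pt_lim g x l2 ->
  derivable_pt_lim (fun t => f t - g t) x (l1 - l2).
Proof. intros; apply (derivable_pt_lim_minus f g); auto. Qed.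
Lemma dplus f g x l1 l2 : derivable_pt_lim f x l1 -> derivable_pt_lim g x l2 ->
  derivable_pt_lim (fun t => f t + g t) x (l1 + l2).
Proof. intros; apply (derivable_pt_lim_plus f g); auto. Qed.
Lemma dopp f x l : derivable_pt_lim f x l -> derivable_pt_lim (fun t => - f t) x (- l).
Proof. intros; apply (derivable_pt_lim_opp f); auto. Qed.

Lemma Rabs_le_between a b : Rabs a <= b -> -b <= a <= b.
Proof. intros H; split; [pose proof (Rle_abs (-a)); rewrite Rabs_Ropp in *; lra|pose proof (Rle_abs a)]; lra. Qed.

Lemma incr h h' u v : u <= v -> (forall t, u <= t <= v -> derivable_pt_lim h t (h' t)) ->
  (forall t, u <= t <= v -> 0 <= h' t) -> h u <= h v.
Proof.
  intros Huv Hd Hp. destruct Huv as [Huv|<-]; [|lra].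
  destruct (MVT_cor2 h h' u v Huv Hd) as [c [E Hc]].
  assert (0 <= h' c * (v - u)) by (apply Rmult_le_pos; [apply Hp; lra| lra]). lra.
Qed.

Lemma fK C m : C / INR (fact (S m)) * INR (S m) = C / INR (fact m).
Proof.
  change (fact (S m)) with (S m * fact m)%nat. rewrite mult_INR.
  pose proof (INR_fact_lt_0 m). assert (0 < INR (S m)) by (apply lt_0_INR; lia).
  field. lra.
Qed.

Lemma taylor_step (g g' : R -> R) (x C : R) (m : nat) :
  (forall t, Rmin 0 x <= t <= Rmax 0 x -> derivable_pt_lim g t (g' t)) ->
  g 0 = 0 ->
  (forall t, Rmin 0 x <= t <= Rmax 0 x -> Rabs (g' t) <= C * Rabs t ^ m / INR (fact m)) ->
  Rabs (g x) <= C * Rabs x ^ (S m) / INR (fact (S m)).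
Proof.
  intros Hd H0 Hb. set (K := C / INR (fact (S m))).
  assert (EK : C * Rabs x ^ S m / INR (fact (S m)) = K * Rabs x ^ S m) by (unfold K; field; apply not_0_INR, fact_neq_0).
  rewrite EK.
  destruct (Rle_lt_dec 0 x) as [Hx|Hx].
  - rewrite Rmin_left in Hd, Hb by lra. rewrite Rmax_right in Hd, Hb by lra.
    rewrite (Rabs_right x) by lra.
    assert (A : forall t, 0 <= t <= x -> Rabs (g' t) <= K * (INR (S m) * t ^ m)).
    { intros t Ht. rewrite <- Rmult_assoc. unfold K. rewrite fK.
      specialize (Hb t Ht). rewrite (Rabs_right t) in Hb by lra. lra. }
    assert (I1 := incr (fun t => K * t ^ S m - g t) (fun t => K * (INR (S m) * t ^ m) - g' t) 0 x Hx
      (fun t Ht => dminus _ _ _ _ _ (dp K m t) (Hd t Ht))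
      (fun t Ht => ltac:(pose proof (A t Ht) as Z; apply Rabs_le_between in Z; lra))).
    assert (I2 := incr (fun t => K * t ^ S m + g t) (fun t => K * (INR (S m) * t ^ m) + g' t) 0 x Hx
      (fun t Ht => dplus _ _ _ _ _ (dp K m t) (Hd t Ht))
      (fun t Ht => ltac:(pose proof (A t Ht) as Z; apply Rabs_le_between in Z; lra))).
    simpl in I1, I2. rewrite H0 in I1, I2. apply Rabs_le. replace (K * (0 * 0 ^ m)) with 0 in I1, I2 by ring. simpl. lra.
  - rewrite Rmin_right in Hd, Hb by lra. rewrite Rmax_left in Hd, Hb by lra.
    rewrite (Rabs_left x) by lra.
    assert (A : forall t, x <= t <= 0 -> Rabs (g' t) <= K * (INR (S m) * (-t) ^ m)).
    { intros t Ht. rewrite <- Rmult_assoc. unfold K. rewrite fK.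
      specialize (Hb t Ht). rewrite (Rabs_left1 t) in Hb by lra. lra. }
    assert (Hx' : x <= 0) by lra.
    assert (I1 := incr (fun t => g t - K * (-t) ^ S m) (fun t => g' t - - (K * (INR (S m) * (-t) ^ m))) x 0 Hx'
      (fun t Ht => dminus _ _ _ _ _ (Hd t Ht) (dq K m t))
      (fun t Ht => ltac:(pose proof (A t Ht) as Z; apply Rabs_le_between in Z; lra))).
    assert (I2 := incr (fun t => - g t - K * (-t) ^ S m) (fun t => - g' t - - (K * (INR (S m) * (-t) ^ m))) x 0 Hx'
      (fun t Ht => dminus _ _ _ _ _ (dopp _ _ _ (Hd t Ht)) (dq K m t))
      (fun t Ht => ltac:(pose proof (A t Ht) as Z; apply Rabs_le_between in Z; lra))).
    simpl in I1, I2. rewrite H0 in I1, I2. replace (- 0) with 0 in I1, I2 by ring. apply Rabs_le.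
    replace (K * (0 * 0 ^ m)) with 0 in I1, I2 by ring. simpl. lra.
Qed.

Lemma sum_rev (u : nat -> R) N : sum_f_R0 (fun k => u (N - k)%nat) N = sum_f_R0 u N.
Proof.
  revert u; induction N as [|N IH]; intros u; [simpl; reflexivity|].
  rewrite tech5. replace (S N - S N)%nat with 0%nat by lia.
  rewrite (decomp_sum u (S N)) by lia. simpl pred.
  rewrite <- (IH (fun j => u (S j))).
  rewrite (sum_eq (fun k => u (S N - k)%nat) (fun k => u (S (N - k)))) by (intros i Hi; f_equal; lia).
  ring.
Qed.

Lemma Bpos N : 0 < sum_f_R0 (fun k => / INR (fact k)) N.
Proof.
  induction N as [|N IH].
  - simpl; lra.
  - rewrite tech5. pose proof (INR_fact_lt_0 (S N)). assert (0 < / INR (fact (S N))) by (apply Rinv_0_lt_compat; lra).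
    lra.
Qed.

Lemma sum_fact_bound n : (1 <= n)%nat ->
  sum_f_R0 (fun k => / INR (fact (n - k))) (n - 1) <= sum_f_R0 (fun k => / INR (fact k)) (n - 1).
Proof.
  intros Hn. rewrite <- sum_rev. apply sum_Rle. intros k Hk.
  apply Rinv_le_contravar. apply INR_fact_lt_0. apply le_INR.
  replace (n - (n - 1 - k))%nat with (S k) by lia. simpl. apply Nat.le_add_r.
Qed.

Lemma sum_scal_l (a : R) (u : nat -> R) N : sum_f_R0 (fun k => a * u k) N = a * sum_f_R0 u N.
Proof. induction N; simpl; [ring| rewrite IHN; ring]. Qed.

Lemma between_bounds d x t : -d <= x <= d -> Rmin 0 x <= t <= Rmax 0 x -> -d <= t <= d.
Proof. unfold Rmin, Rmax; destruct (Rle_dec 0 x); lra. Qed.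

Lemma core (n:nat) (N e : nat -> R -> R) (d c : R) :
 (1 <= n)%nat -> 0 < d -> 0 <= c -> c * B n < 1 ->
 (forall k t, 0 <= N k t) ->
 (forall k x C m, (k < n)%nat -> 0 <= C -> -d <= x <= d ->
    (forall t, Rmin 0 x <= t <= Rmax 0 x -> N (S k) t <= C * Rabs t ^ m / INR (fact m)) ->
    N k x <= C * Rabs x ^ S m / INR (fact (S m))) ->
 (forall x, -d <= x <= d -> continuity_pt (N n) x) ->
 (forall x, -d <= x <= d -> x <> 0 -> N n x <= sum_f_R0 (fun k => e k x * N k x) (n-1)) ->
 (forall k x, (k<n)%nat -> -d <= x <= d -> x <> 0 -> 0 <= e k x /\ Rabs x ^ (n-k) * e k x <= c) ->
 forall x, -d <= x <= d -> N 0%nat x = 0.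
Proof.
  intros Hn Hd Hc HcB Hpos Hstep Hcont Hode He.
  destruct (continuity_ab_maj (N n) (-d) d) as [x0 [Hmax Hx0]]; [lra | auto |].
  set (M := N n x0). assert (HM : 0 <= M) by apply Hpos.
  assert (Tay : forall j, (j <= n)%nat -> forall x, -d <= x <= d ->
     N (n - j)%nat x <= M * Rabs x ^ j / INR (fact j)).
  { induction j as [|j IH]; intros Hj x Hx.
    - rewrite Nat.sub_0_r. replace (M * Rabs x ^ 0 / INR (fact 0)) with M by (simpl; field).
      apply Hmax; exact Hx.
    - apply Hstep; [lia | exact HM | exact Hx |]. intros t Ht.
      replace (S (n - S j)) with (n - j)%nat by lia. apply IH; [lia|].
      eapply between_bounds; eauto. }
  assert (Hq : forall x, -d <= x <= d -> x <> 0 -> N n x <= c * B n * M).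
  { intros x Hx Hx0'. eapply Rle_trans. apply Hode; auto.
    apply Rle_trans with (sum_f_R0 (fun k => c * M * / INR (fact (n - k))) (n-1)).
    - apply sum_Rle; intros k Hk.
      assert (T := Tay (n - k)%nat ltac:(lia) x Hx). replace (n - (n - k))%nat with k in T by lia.
      destruct (He k x ltac:(lia) Hx Hx0') as [He1 He2].
      apply Rle_trans with (e k x * (M * Rabs x ^ (n-k) / INR (fact (n-k)))).
      + apply Rmult_le_compat_l; auto.
      + replace (e k x * (M * Rabs x ^ (n-k) / INR (fact (n-k)))) with
          ((Rabs x ^ (n-k) * e k x) * (M / INR (fact (n-k)))) by (field; apply INR_fact_neq_0).
        replace (c * M * / INR (fact (n - k))) with (c * (M / INR (fact (n-k)))) by (unfold Rdiv; ring).
        apply Rmult_le_compat_r; auto.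
        unfold Rdiv; apply Rmult_le_pos; auto. left; apply Rinv_0_lt_compat, INR_fact_lt_0.
    - rewrite sum_scal_l. replace (c * B n * M) with (c * M * B n) by ring.
      apply Rmult_le_compat_l; [apply Rmult_le_pos; auto|]. unfold B. apply sum_fact_bound; auto. }
  assert (Hall : forall x, -d <= x <= d -> N n x <= c * B n * M).
  { intros x Hx. destruct (Req_dec x 0) as [->|Hx0']; [|apply Hq; auto].
    apply Rnot_lt_le; intro Hlt. specialize (Hcont 0 ltac:(lra)).
    unfold continuity_pt, continue_in, limit1_in, limit_in in Hcont.
    destruct (Hcont (N n 0 - c * B n * M)) as [alp [Halp Hb]]; [lra|].
    set (t := Rmin (alp/2) d).
    assert (Ht1 : 0 < t) by (unfold t, Rmin; destruct Rle_dec; lra).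
    assert (Ht2 : t <= d) by (unfold t; apply Rmin_r).
    assert (Ht3 : t < alp) by (unfold t; pose proof (Rmin_l (alp/2) d); lra).
    specialize (Hb t). simpl in Hb. unfold R_dist in Hb.
    assert (Hx1 : D_x no_cond 0 t /\ Rabs (t - 0) < alp).
    { split. unfold D_x, no_cond; split; auto; lra. rewrite Rminus_0_r, Rabs_right; lra. }
    specialize (Hb Hx1). pose proof (Hq t ltac:(lra) ltac:(lra)).
    pose proof (Rle_abs (- (N n t - N n 0))). rewrite Rabs_Ropp in *. lra. }
  assert (HM0 : M <= 0).
  { pose proof (Hall x0 Hx0). fold M in H. pose proof (Bpos (n-1)). fold (B n) in H0. nra. }
  intros x Hx. assert (T := Tay n ltac:(lia) x Hx). rewrite Nat.sub_diag in T.
  assert (M = 0) by lra. rewrite H in T. unfold Rdiv in T. rewrite !Rmult_0_l in T.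
  pose proof (Hpos 0%nat x). lra.
Qed.

Lemma uniform n (g : nat -> R -> R) c0 : 0 < c0 ->
  (forall k, (k < n)%nat -> limsup_at0_lt (g k) c0) ->
  exists c d, 0 <= c /\ c < c0 /\ 0 < d /\
    forall k x, (k < n)%nat -> 0 < Rabs x < d -> g k x <= c.
Proof.
  intros Hc0. induction n as [|n IH]; intros Hl.
  - exists 0, 1. repeat split; try lra. intros; lia.
  - destruct IH as [c [d [H1 [H2 [H3 H4]]]]]. { intros k Hk; apply Hl; lia. }
    destruct (Hl n ltac:(lia)) as [c' [Hc' [d' [Hd' H']]]].
    exists (Rmax c c'), (Rmin d d'). repeat split.
    + eapply Rle_trans; [exact H1| apply Rmax_l].
    + unfold Rmax; destruct Rle_dec; lra.
    + unfold Rmin; destruct Rle_dec; lra.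
    + intros k x Hk Hx. pose proof (Rmin_l d d'). pose proof (Rmin_r d d').
      pose proof (Rmax_l c c'). pose proof (Rmax_r c c').
      destruct (Nat.eq_dec k n) as [->|Hkn].
      * pose proof (H' x ltac:(lra)). lra.
      * pose proof (H4 k x ltac:(lia) ltac:(lra)). lra.
Qed.

Lemma dcont f x l : derivable_pt_lim f x l -> continuity_pt f x.
Proof. intros H. apply derivable_continuous_pt. exists l. exact H. Qed.

Lemma cB_lt n c : (1 <= n)%nat -> c < / B n -> c * B n < 1.
Proof.
  intros _ H. pose proof (Bpos (n - 1)). fold (B n) in H0.
  apply Rmult_lt_compat_r with (r := B n) in H; auto. rewrite Rinv_l in H; lra.
Qed.

Lemma CS a b c d : Rabs (a * c + b * d) <= sqrt (a ^ 2 + b ^ 2) * sqrt (c ^ 2 + d ^ 2).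
Proof.
  rewrite <- sqrt_mult by nra. rewrite <- sqrt_Rsqr_abs. apply sqrt_le_1.
  - apply Rle_0_sqr.
  - nra.
  - unfold Rsqr. assert ((a^2+b^2)*(c^2+d^2) - (a*c+b*d)*(a*c+b*d) = (a*d-b*c)^2) by ring. pose proof (pow2_ge_0 (a*d-b*c)). lra.
Qed.

Lemma Cnorm_pos z : 0 <= Cnorm z.
Proof. apply sqrt_pos. Qed.

Lemma Cnorm_mul z w : Cnorm (Cmul z w) = Cnorm z * Cnorm w.
Proof.
  unfold Cnorm, Cmul; simpl. rewrite <- sqrt_mult by nra. f_equal. ring.
Qed.

Lemma Cnorm_add z w : Cnorm (Cadd z w) <= Cnorm z + Cnorm w.
Proof.
  destruct z as [a b], w as [c d]. unfold Cnorm, Cadd; cbn [fst snd].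
  pose proof (CS a b c d). pose proof (Rle_abs (a*c+b*d)).
  pose proof (sqrt_pos (a^2+b^2)). pose proof (sqrt_pos (c^2+d^2)).
  pose proof (sqrt_sqrt (a^2+b^2) ltac:(nra)). pose proof (sqrt_sqrt (c^2+d^2) ltac:(nra)).
  rewrite <- (sqrt_pow2 (sqrt (a ^ 2 + b ^ 2) + sqrt (c ^ 2 + d ^ 2))) by lra.
  apply sqrt_le_1; [pose proof (pow2_ge_0 (a+c)); pose proof (pow2_ge_0 (b+d)); lra | apply pow2_ge_0 |].
  set (sa := sqrt (a^2+b^2)) in *. set (sb := sqrt (c^2+d^2)) in *.
  assert (E1 : (sa + sb)^2 = sa*sa + sb*sb + 2*(sa*sb)) by ring.
  assert (E2 : (a+c)^2 + (b+d)^2 = (a^2+b^2) + (c^2+d^2) + 2*(a*c+b*d)) by ring.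
  rewrite E1, E2, H3, H4. lra.
Qed.

Lemma Cnorm_sum F m : Cnorm (Csum F m) <= sum_f_R0 (fun k => Cnorm (F k)) m.
Proof.
  induction m as [|m IH]; simpl; [lra|].
  eapply Rle_trans; [apply Cnorm_add|]. lra.
Qed.

Lemma Ctaylor_step (g g' : R -> Cx) (x C : R) (m : nat) :
  0 <= C ->
  (forall t, Rmin 0 x <= t <= Rmax 0 x ->
     derivable_pt_lim (fun s => fst (g s)) t (fst (g' t)) /\
     derivable_pt_lim (fun s => snd (g s)) t (snd (g' t))) ->
  g 0 = C0 ->
  (forall t, Rmin 0 x <= t <= Rmax 0 x -> Cnorm (g' t) <= C * Rabs t ^ m / INR (fact m)) ->
  Cnorm (g x) <= C * Rabs x ^ (S m) / INR (fact (S m)).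
Proof.
  intros HC Hd H0 Hb. set (u := g x).
  assert (Hu := Cnorm_pos u).
  assert (T := taylor_step (fun s => fst u * fst (g s) + snd u * snd (g s))
                 (fun s => fst u * fst (g' s) + snd u * snd (g' s)) x (C * Cnorm u) m).
  assert (Hbig : 0 <= C * Rabs x ^ S m / INR (fact (S m))).
  { unfold Rdiv. apply Rmult_le_pos; [apply Rmult_le_pos; auto; apply pow_le, Rabs_pos|].
    left; apply Rinv_0_lt_compat, INR_fact_lt_0. }
  assert (E : fst u * fst (g x) + snd u * snd (g x) = Cnorm u * Cnorm u).
  { unfold Cnorm. rewrite sqrt_sqrt by nra. fold u. ring. }
  cbv beta in T. rewrite E in T. rewrite Rabs_right in T by nra.
  assert (Hle : Cnorm u * Cnorm u <= Cnorm u * (C * Rabs x ^ S m / INR (fact (S m)))).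
  { eapply Rle_trans; [apply T|].
    - intros t Ht. destruct (Hd t Ht) as [D1 D2].
      apply dplus; [exact (derivable_pt_lim_scal _ (fst u) t _ D1) | exact (derivable_pt_lim_scal _ (snd u) t _ D2)].
    - rewrite H0. simpl. ring.
    - intros t Ht. eapply Rle_trans; [apply (CS (fst u) (snd u) (fst (g' t)) (snd (g' t)))|].
      fold (Cnorm (g' t)). fold (Cnorm u).
      replace (C * Cnorm u * Rabs t ^ m / INR (fact m)) with (Cnorm u * (C * Rabs t ^ m / INR (fact m))) by (unfold Rdiv; ring).
      apply Rmult_le_compat_l; auto.
    - right; unfold Rdiv; ring. }
  destruct Hu as [Hu|Hu]; [|rewrite <- Hu; exact Hbig].
  apply Rmult_le_reg_l with (Cnorm u); auto.
Qed.

Lemma Bn_pos n : 0 < B n.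
Proof. apply Bpos. Qed.

Lemma Cnorm_zero z : Cnorm z = 0 -> z = C0.
Proof.
  destruct z as [a b]. unfold Cnorm, C0; cbn [fst snd]. intros H.
  apply sqrt_eq_0 in H; [|pose proof (pow2_ge_0 a); pose proof (pow2_ge_0 b); lra].
  pose proof (pow2_ge_0 a); pose proof (pow2_ge_0 b).
  assert (a = 0) by nra. assert (b = 0) by nra. subst; reflexivity.
Qed.

Lemma Cnorm_neg z w : Cadd z w = C0 -> Cnorm z = Cnorm w.
Proof.
  destruct z as [a b], w as [c d]. unfold Cadd, C0, Cnorm; cbn [fst snd]. intros H.
  injection H as H1 H2. f_equal. replace a with (-c) by lra. replace b with (-d) by lra. ring.
Qed.

Theorem mainTheorem2 :
  (* K = R *)
  (forall (n : nat) (a : R) (coef : nat -> R -> R -> R) (f : R -> R)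
          (D : nat -> R -> R),
     (1 <= n)%nat -> 0 < a ->
     derivs_on a f D ->
     (forall x, -a < x < a -> x <> 0 ->
        D n x + sum_f_R0 (fun k => coef k x (f x) * D k x) (n - 1) = 0) ->
     (forall k, (k < n)%nat -> D k 0 = 0) ->
     (forall k, (k < n)%nat ->
        limsup_at0_lt (fun x => Rabs x ^ (n - k) * Rabs (coef k x (f x))) (/ B n)) ->
     exists delta, 0 < delta /\ delta < a /\
       forall x, -delta <= x <= delta -> f x = 0)
  /\
  (* K = C *)
  (forall (n : nat) (a : R) (coef : nat -> R -> Cx -> Cx) (f : R -> Cx)
          (D : nat -> R -> Cx),
     (1 <= n)%nat -> 0 < a ->
     Cderivs_on a f D ->
     (forall x, -a < x < a -> x <> 0 ->
        Cadd (D n x) (Csum (fun k => Cmul (coef k x (f x)) (D k x)) (n - 1)) = C0) ->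
     (forall k, (k < n)%nat -> D k 0 = C0) ->
     (forall k, (k < n)%nat ->
        limsup_at0_lt (fun x => Rabs x ^ (n - k) * Cnorm (coef k x (f x))) (/ B n)) ->
     exists delta, 0 < delta /\ delta < a /\
       forall x, -delta <= x <= delta -> f x = C0).
Proof.
  split.
  - intros n a coef f D Hn Ha [HD0 HD] Hode Hinit Hlim.
    destruct (uniform n (fun k x => Rabs x ^ (n - k) * Rabs (coef k x (f x))) (/ B n))
      as [c [d [Hc [HcB [Hd Hu]]]]]; [apply Rinv_0_lt_compat, Bn_pos | exact Hlim |].
    set (del := Rmin (d/2) (a/2)).
    assert (Hdel1 : 0 < del) by (unfold del, Rmin; destruct Rle_dec; lra).
    assert (Hdel2 : del <= d/2) by apply Rmin_l.
    assert (Hdel3 : del <= a/2) by apply Rmin_r.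
    exists del. split; [lra|]. split; [lra|].
    assert (Z := core n (fun k t => Rabs (D k t)) (fun k t => Rabs (coef k t (f t))) del c Hn Hdel1 Hc
                   (cB_lt n c Hn HcB)).
    intros x Hx. rewrite <- HD0 by lra. destruct (Req_dec (D 0%nat x) 0) as [E|E]; [exact E|]. exfalso; apply (Rabs_no_R0 _ E). apply Z; auto.
    + intros; apply Rabs_pos.
    + intros k y C m Hk HC Hy Hb. cbv beta in *. apply taylor_step with (g' := D (S k)); auto.
      intros t Ht. pose proof (between_bounds del y t Hy Ht). apply HD; lra.
    + intros y Hy. apply (continuity_pt_comp (D n) Rabs y).
      * apply (dcont _ _ (D (S n) y)). apply HD; lra.
      * apply Rcontinuity_abs.
    + intros y Hy Hy0. cbv beta.
      assert (E1 := Hode y ltac:(lra) Hy0).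
      replace (D n y) with (- sum_f_R0 (fun k => coef k y (f y) * D k y) (n - 1)) by lra.
      rewrite Rabs_Ropp. eapply Rle_trans; [apply sum_f_R0_triangle|].
      right. apply sum_eq. intros i _. apply Rabs_mult.
    + intros k y Hk Hy Hy0. cbv beta. split; [apply Rabs_pos|].
      apply (Hu k y Hk). split; [apply Rabs_pos_lt; auto|]. pose proof (Rabs_le y del Hy); lra.
  - intros n a coef f D Hn Ha [HD0 HD] Hode Hinit Hlim.
    destruct (uniform n (fun k x => Rabs x ^ (n - k) * Cnorm (coef k x (f x))) (/ B n))
      as [c [d [Hc [HcB [Hd Hu]]]]]; [apply Rinv_0_lt_compat, Bn_pos | exact Hlim |].
    set (del := Rmin (d/2) (a/2)).
    assert (Hdel1 : 0 < del) by (unfold del, Rmin; destruct Rle_dec; lra).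
    assert (Hdel2 : del <= d/2) by apply Rmin_l.
    assert (Hdel3 : del <= a/2) by apply Rmin_r.
    exists del. split; [lra|]. split; [lra|].
    assert (Z := core n (fun k t => Cnorm (D k t)) (fun k t => Cnorm (coef k t (f t))) del c Hn Hdel1 Hc
                   (cB_lt n c Hn HcB)).
    intros x Hx. rewrite <- HD0 by lra. apply Cnorm_zero. apply Z; auto.
    + intros; apply Cnorm_pos.
    + intros k y C m Hk HC Hy Hb. cbv beta in *. apply Ctaylor_step with (g' := D (S k)); auto.
      intros t Ht. pose proof (between_bounds del y t Hy Ht). apply HD; lra.
    + intros y Hy. destruct (HD n y ltac:(lra)) as [D1 D2].
      assert (Hi := dplus _ _ _ _ _
         (derivable_pt_lim_comp (fun s => fst (D n s)) (fun z => z ^ 2) y _ _ D1 (derivable_pt_lim_pow _ 2))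
         (derivable_pt_lim_comp (fun s => snd (D n s)) (fun z => z ^ 2) y _ _ D2 (derivable_pt_lim_pow _ 2))).
      apply dcont in Hi.
      apply (continuity_pt_comp (fun t => fst (D n t) ^ 2 + snd (D n t) ^ 2) sqrt y).
      * exact Hi.
      * apply continuity_pt_sqrt. pose proof (pow2_ge_0 (fst (D n y))); pose proof (pow2_ge_0 (snd (D n y))); lra.
    + intros y Hy Hy0. cbv beta.
      assert (E1 := Hode y ltac:(lra) Hy0). apply Cnorm_neg in E1. rewrite E1.
      eapply Rle_trans; [apply Cnorm_sum|].
      right. apply sum_eq. intros i _. apply Cnorm_mul.
    + intros k y Hk Hy Hy0. cbv beta. split; [apply Cnorm_pos|].
      apply (Hu k y Hk). split; [apply Rabs_pos_lt; auto|]. pose proof (Rabs_le y del Hy); lra.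
Qed.
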